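(* Let $n\ge1$ and $\pi\in S_n$, and set $w=\hat\pi$. The following are equivalent: (a) $\pi\in\mathcal C_n(321)$; (b) $\hat\pi_1=n$ and $N_{2\,\underline{31}}(w)+N_{\underline{14}\,\underline{23}}(w)+N_{\underline{41}\,\underline{32}}(w)-N_{\underline{24}\,\underline{13}}(w)-N_{\underline{31}\,\underline{42}}(w)=0$; (c) $\hat\pi_1=n$ and $N_{\underline{231}}(w)+N_{\underline{23}\,\underline{41}}(w)+N_{\underline{24}\,\underline{31}}(w)+N_{\underline{32}\,\underline{41}}(w)+N_{\underline{14}\,\underline{23}}(w)+N_{\underline{41}\,\underline{32}}(w)-N_{\underline{24}\,\underline{13}}(w)=0$.
   Context: Permutations of $[n]$ are written in one-line notation $\pi=\pi_1\cdots\pi_n$. A permutation contains $321$ if there are $i<j<k$ with $\pi_i>\pi_j>\pi_k$. $\mathcal C_n$ is the set of cyclic permutations of $[n]$ (a single $n$-cycle), and $\mathcal C_n(321)$ those avoiding $321$. The standard cycle notation of $\pi$ writes each cycle with its largest element first, as $(m,\pi(m),\pi^2(m),\dots)$, and lists the cycles in increasing order of their largest elements. $\theta:S_n\to S_n$ sends $\pi$ to the permutation whose one-line notation is the standard cycle notation of $\pi$ with parentheses erased; $\hat\pi=\theta(\pi)$. Pattern counts, for a sequence $w=w_1\cdots w_N$ of distinct integers (all pairs $(i,j)$ below range over $i+2\le j\le N-1$ unless stated otherwise): $N_{2\,\underline{31}}(w)=\#\{(i,j):1\le i<j\le N-1,\ w_{j+1}<w_i<w_j\}$; $N_{\underline{231}}(w)=\#\{i: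 i+2\le N,\ w_{i+2}<w_i<w_{i+1}\}$; $N_{\underline{14}\,\underline{23}}(w)=\#\{(i,j): w_i<w_j<w_{j+1}<w_{i+1}\}$; $N_{\underline{41}\,\underline{32}}(w)=\#\{(i,j): w_{i+1}<w_{j+1}<w_j<w_i\}$; $N_{\underline{24}\,\underline{13}}(w)=\#\{(i,j): w_j<w_i<w_{j+1}<w_{i+1}\}$; $N_{\underline{31}\,\underline{42}}(w)=\#\{(i,j): w_{i+1}<w_{j+1}<w_i<w_j\}$; $N_{\underline{23}\,\underline{41}}(w)=\#\{(i,j): w_{j+1}<w_i<w_{i+1}<w_j\}$; $N_{\underline{24}\,\underline{31}}(w)=\#\{(i,j): w_{j+1}<w_i<w_j<w_{i+1}\}$; $N_{\underline{32}\,\underline{41}}(w)=\#\{(i,j): w_{j+1}<w_{i+1}<w_i<w_j\}$. *)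

(* Defs.v *)
From mathcomp Require Import all_boot all_order all_algebra all_fingroup.
Set Implicit Arguments. Unset Strict Implicit. Unset Printing Implicit Defensive.

(* Permutations of [n] are modelled by s : 'S_n acting on 'I_n = {0,...,n-1};
   the one-line value pi_i (1-based) corresponds to (s (i-1)) + 1. *)

Definition contains321 n (s : 'S_n) : bool :=
  [exists i : 'I_n, exists j : 'I_n, exists k : 'I_n,
     [&& i < j, j < k, s k < s j & s j < s i]].

Definition is_cyclic n (s : 'S_n) : bool := #|porbits s| == 1.

Definition in_C321 n (s : 'S_n) : bool := is_cyclic s && ~~ contains321 s.

Definition cycle_max n (s : 'S_n) (m : 'I_n) : bool :=
  [forall y in porbit s m, y <= m].

Definition cycle_word n (s : 'S_n) (m : 'I_n) : seq 'I_n :=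
  traject s m #|porbit s m|.

(* standard cycle notation with parentheses erased: cycles led by their
   maxima, listed in increasing order of maxima (enum 'I_n is increasing) *)
Definition theta_seq n (s : 'S_n) : seq 'I_n :=
  flatten [seq cycle_word s m | m <- enum 'I_n & cycle_max s m].

Definition hat n (s : 'S_n) : seq nat := [seq (val x).+1 | x <- theta_seq s].

(* 1-based access w_i *)
Definition wat (w : seq nat) (i : nat) : nat := nth 0 w i.-1.

Definition pair_count (w : seq nat) (P : nat -> nat -> bool) : nat :=
  \sum_(1 <= i < size w) \sum_(i.+2 <= j < size w) P i j.

Definition N_2_31 (w : seq nat) : nat :=
  \sum_(1 <= i < size w) \sum_(i.+1 <= j < size w)
     ((wat w j.+1 < wat w i) && (wat w i < wat w j)).

Definition N_231 (w : seq nat) : nat :=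
  \sum_(1 <= i < (size w).-1) ((wat w i.+2 < wat w i) && (wat w i < wat w i.+1)).

Definition N_14_23 w := pair_count w (fun i j =>
  [&& wat w i < wat w j, wat w j < wat w j.+1 & wat w j.+1 < wat w i.+1]).
Definition N_41_32 w := pair_count w (fun i j =>
  [&& wat w i.+1 < wat w j.+1, wat w j.+1 < wat w j & wat w j < wat w i]).
Definition N_24_13 w := pair_count w (fun i j =>
  [&& wat w j < wat w i, wat w i < wat w j.+1 & wat w j.+1 < wat w i.+1]).
Definition N_31_42 w := pair_count w (fun i j =>
  [&& wat w i.+1 < wat w j.+1, wat w j.+1 < wat w i & wat w i < wat w j]).
Definition N_23_41 w := pair_count w (fun i j =>
  [&& wat w j.+1 < wat w i, wat w i < wat w i.+1 & wat w i.+1 < wat w j]).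
Definition N_24_31 w := pair_count w (fun i j =>
  [&& wat w j.+1 < wat w i, wat w i < wat w j & wat w j < wat w i.+1]).
Definition N_32_41 w := pair_count w (fun i j =>
  [&& wat w j.+1 < wat w i.+1, wat w i.+1 < wat w i & wat w i < wat w j]).

(* Main.v *)
Require Import Defs.
From mathcomp Require Import all_boot all_order all_algebra all_fingroup.
From mathcomp Require Import zify.
Set Implicit Arguments. Unset Strict Implicit. Unset Printing Implicit Defensive.

Lemma cross (f : nat -> nat) v a b : a <= b -> (forall k, a <= k <= b -> f k != v) ->
  \sum_(a <= k < b) ((f k.+1 < v) && (v < f k)) + (v < f b) =
  \sum_(a <= k < b) ((f k < v) && (v < f k.+1)) + (v < f a).
Proof.
elim: b => [|b IH] hab hf.
  by move: hab; rewrite leqn0 => /eqP ->; rewrite !big_geq.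
case: (ltnP b a) => hba.
  have -> : a = b.+1 by lia.
  by rewrite !big_geq.
rewrite !big_nat_recr //=.
have h1 := hf b.+1; have h2 := hf b.
have := IH hba (fun k hk => hf k (ltac:(lia))).
have := h1 (ltac:(lia)); have := h2 (ltac:(lia)).
lia.
Qed.

Ltac cmp a b := case: (ltngtP a b) => ?.

Lemma PW1 a b c d : a < b -> a != c -> a != d -> b != c -> b != d -> c != d ->
  [&& c<a, a<d & d<b] + [&& b<d, d<a & a<c] + ([&& c<a, a<b & b<d] + [&& d<b, b<a & a<c]) = (c<a)&&(a<d) :> nat.
Proof. move=> *; cmp a c; cmp a d; cmp b c; cmp b d; cmp c d; try lia. Qed.

Lemma PW2 a b c d : b < a -> a != c -> a != d -> b != c -> b != d -> c != d ->
  (d<a)&&(a<c) = [&& c<a, a<d & d<b] + [&& b<d, d<a & a<c] + ([&& c<a, a<b & b<d] + [&& d<b, b<a & a<c]) :> nat.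
Proof. move=> *; cmp a c; cmp a d; cmp b c; cmp b d; cmp c d; try lia. Qed.

Lemma PW3 a b c d : a != b -> a != c -> a != d -> b != c -> b != d -> c != d ->
  (d<a)&&(a<c) = [&& d<a, a<b & b<c] + [&& d<a, a<c & c<b] + [&& d<b, b<a & a<c] + [&& b<d, d<a & a<c] :> nat.
Proof. move=> *; cmp a b; cmp a c; cmp a d; cmp b c; cmp b d; cmp c d; try lia. Qed.

Section C.
Variable w : seq nat.
Hypothesis Uw : uniq w.
Local Notation f := (wat w).
Local Notation N := (size w).

Lemma distw k l : 0 < k <= N -> 0 < l <= N -> k != l -> f k != f l.
Proof.
case: k => [|k]; case: l => [|l] //= hk hl hkl.
rewrite /wat /= nth_uniq //; lia.
Qed.

Definition X := \sum_(1 <= i < N)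
  (\sum_(i.+2 <= j < N)
     ([&& f j < f i, f i < f i.+1 & f i.+1 < f j.+1] +
      [&& f j.+1 < f i.+1, f i.+1 < f i & f i < f j])
   + [&& f N < f i & f i < f i.+1]).

Lemma C1 : N_2_31 w = N_24_13 w + N_31_42 w + X.
Proof.
rewrite /N_2_31 /N_24_13 /N_31_42 /pair_count /X -!big_split /=.
apply: eq_big_nat => i /andP[hi1 hi2].
case: (ltnP i.+1 N) => hiN; last first.
  have eN : i.+1 = N by lia.
  rewrite !big_geq; try lia. rewrite -eN; lia.
rewrite big_ltn //.
have dii : f i != f i.+1 by apply: distw; lia.
have diN : f i != f N by apply: distw; lia.
have [hasc|hasc] : f i < f i.+1 \/ f i.+1 < f i by lia.
-
  have hd : forall k, i.+1 <= k <= N -> f k != f i.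
    by move=> k hk; apply: distw; lia.
  have := @cross f (f i) i.+1 N (ltnW hiN) hd.
  rewrite (@big_ltn _ _ _ i.+1 N _ hiN) (@big_ltn _ _ _ i.+1 N _ hiN).
  have e1 : \sum_(i.+2 <= j < N) [&& f j < f i, f i < f j.+1 & f j.+1 < f i.+1]
         + \sum_(i.+2 <= j < N) [&& f i.+1 < f j.+1, f j.+1 < f i & f i < f j]
         + \sum_(i.+2 <= j < N) ([&& f j < f i, f i < f i.+1 & f i.+1 < f j.+1] +
              [&& f j.+1 < f i.+1, f i.+1 < f i & f i < f j])
         = \sum_(i.+2 <= j < N) ((f j < f i) && (f i < f j.+1)).
    rewrite -!big_split /=; apply: eq_big_nat => j hj.
    apply: PW1 => //; apply: distw; lia.
  move: e1; lia.
-
  have e1 : \sum_(i.+2 <= j < N) ((f j.+1 < f i) && (f i < f j))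
     = \sum_(i.+2 <= j < N) [&& f j < f i, f i < f j.+1 & f j.+1 < f i.+1]
         + \sum_(i.+2 <= j < N) [&& f i.+1 < f j.+1, f j.+1 < f i & f i < f j]
         + \sum_(i.+2 <= j < N) ([&& f j < f i, f i < f i.+1 & f i.+1 < f j.+1] +
              [&& f j.+1 < f i.+1, f i.+1 < f i & f i < f j]).
    rewrite -!big_split /=; apply: eq_big_nat => j hj.
    apply: PW2 => //; apply: distw; lia.
  move: e1; lia.
Qed.

Lemma C2 : N_231 w + N_23_41 w + N_24_31 w + N_32_41 w + N_31_42 w = N_2_31 w.
Proof.
rewrite /N_231 /N_2_31 /N_23_41 /N_24_31 /N_32_41 /N_31_42 /pair_count.
have -> : \sum_(1 <= i < N.-1) ((f i.+2 < f i) && (f i < f i.+1))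
   = \sum_(1 <= i < N) ((i.+1 < N) && ((f i.+2 < f i) && (f i < f i.+1))).
  case: (ltnP 1 N) => hN; last by rewrite !big_geq //; lia.
  rewrite (@big_cat_nat _ _ _ N.-1 1 N); [|lia|lia].
  rewrite /= [X in _ = _ + X]big_ltn; last by lia.
  rewrite [X in _ = _ + (_ + X)]big_geq; last by lia.
  have -> : (N.-1.+1 < N) = false by lia.
  rewrite /=.
  suff -> : \sum_(1 <= i < N.-1) ((f i.+2 < f i) && (f i < f i.+1)) =
    \sum_(1 <= i < N.-1) ((i.+1 < N) && ((f i.+2 < f i) && (f i < f i.+1))) by lia.
  apply: eq_big_nat => i hi.
  have -> : (i.+1 < N) = true by lia.
  by [].
rewrite -!big_split /=; apply: eq_big_nat => i /andP[hi1 hi2].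
case: (ltnP i.+1 N) => hiN; last first.
  rewrite !big_geq; lia.
rewrite [X in _ = X](@big_ltn _ _ _ i.+1 N _ hiN).
have -> : \sum_(i.+2 <= j < N) ((f j.+1 < f i) && (f i < f j)) =
   \sum_(i.+2 <= j < N) [&& f j.+1 < f i, f i < f i.+1 & f i.+1 < f j] +
   \sum_(i.+2 <= j < N) [&& f j.+1 < f i, f i < f j & f j < f i.+1] +
   \sum_(i.+2 <= j < N) [&& f j.+1 < f i.+1, f i.+1 < f i & f i < f j] +
   \sum_(i.+2 <= j < N) [&& f i.+1 < f j.+1, f j.+1 < f i & f i < f j].
  rewrite -!big_split /=; apply: eq_big_nat => j hj.
  apply: PW3; apply: distw; lia.
lia.
Qed.
End C.

Lemma card_lt n k : k <= n -> #|[set v : 'I_n | v < k]| = k.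
Proof.
move=> hk.
have -> : [set v : 'I_n | v < k] = widen_ord hk @: [set: 'I_k].
  apply/setP => v; rewrite inE; apply/idP/imsetP.
    move=> hv; exists (Ordinal hv); first by rewrite inE.
    by apply: val_inj.
  by case=> u _ ->; rewrite /= ltn_ord.
rewrite card_imset ?cardsT ?card_ord //.
by move=> a b /(congr1 val) /= /val_inj.
Qed.

Definition bad n (s : 'S_n) (x y : 'I_n) : bool :=
  [&& x < y, s y < s x & (y < s y) || (s x < x)].

Lemma pig1 n (s : 'S_n) (x y : 'I_n) : x < y -> s y < s x -> y < s y ->
  exists z : 'I_n, y < z /\ s z < s y.
Proof.
move=> hxy hs hy.
case: (pickP (fun z : 'I_n => (y < z) && (s z < s y))) => [z /andP[? ?]|H]; first by exists z.
exfalso.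
pose A := s @^-1: [set v : 'I_n | v < s y].
have cA : #|A| = s y by rewrite card_preimset ?card_lt //; [exact: ltnW | exact: perm_inj].
have sub : A \subset [set z : 'I_n | z < y] :\ x.
  apply/subsetP => z; rewrite !inE => hz.
  have := H z; move/negbT; rewrite negb_and.
  have : z != x by apply/eqP => e; move: hz; rewrite e; lia.
  have : z != y by apply/eqP => e; move: hz; rewrite e; lia.
  move=> h1 h2 h3; rewrite h2 /=.
  have : nat_of_ord z != nat_of_ord y by [].
  move: h3 hz; lia.
have := subset_leq_card sub.
have := cardsD1 x [set z : 'I_n | z < y].
rewrite inE hxy card_lt; last by apply: ltnW; exact: ltn_ord.
rewrite cA /= => e1 e2; set c := #|[set z : 'I_n | z < y] :\ x| in e1 e2; lia.
Qed.

Lemma pig2 n (s : 'S_n) (x y : 'I_n) : x < y -> s y < s x -> s x < x ->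
  exists z : 'I_n, z < x /\ s x < s z.
Proof.
move=> hxy hs hx.
case: (pickP (fun z : 'I_n => (z < x) && (s x < s z))) => [z /andP[? ?]|H]; first by exists z.
exfalso.
pose A := s @^-1: (~: [set v : 'I_n | v < (s x).+1]).
have cA : #|A| = n - (s x).+1.
  rewrite card_preimset; last exact: perm_inj.
  have := cardsC [set v : 'I_n | v < (s x).+1].
  rewrite card_lt; last exact: ltn_ord.
  rewrite card_ord => e.
  set c := #|~: _| in e *; lia.
have sub : A \subset (~: [set z : 'I_n | z < x.+1]) :\ y.
  apply/subsetP => z; rewrite !inE => hz.
  have := H z; move/negbT; rewrite negb_and.
  have : z != y by apply/eqP => e; move: hz; rewrite e; lia.
  move=> h2 h3; rewrite h2 /=.
  have : nat_of_ord z != nat_of_ord x by apply/eqP => e; move: hz; rewrite (val_inj e); lia.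
  move: h3 hz; lia.
have := subset_leq_card sub.
have := cardsD1 y (~: [set z : 'I_n | z < x.+1]).
have := cardsC [set v : 'I_n | v < x.+1].
rewrite !inE card_lt; last exact: ltn_ord.
rewrite card_ord cA /= => e1 e2 e3.
have := ltn_ord y.
set c := #|_ :\ y| in e2 e3.
set d := #|~: _| in e1 e2.
lia.
Qed.

Lemma L1 n (s : 'S_n) : (forall x : 'I_n, 0 < x -> s x != x) ->
  contains321 s = [exists x, exists y, bad s x y].
Proof.
move=> nofix; apply/idP/idP.
  case/existsP => i /existsP [j /existsP [k /and4P [hij hjk hkj hji]]].
  have nf := nofix j (leq_ltn_trans (leq0n i) hij).
  have [h|h] : j < s j \/ s j < j.
    have : nat_of_ord (s j) != nat_of_ord j by [].
    lia.
  - apply/existsP; exists i; apply/existsP; exists j.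
    by rewrite /bad hij hji h.
  - apply/existsP; exists j; apply/existsP; exists k.
    by rewrite /bad hjk hkj h orbT.
case/existsP => x /existsP [y /and3P [hxy hs hor]].
case/orP: hor => h.
  have [z [hz1 hz2]] := pig1 hxy hs h.
  apply/existsP; exists x; apply/existsP; exists y; apply/existsP; exists z.
  by rewrite hxy hz1 hz2 hs.
have [z [hz1 hz2]] := pig2 hxy hs h.
apply/existsP; exists z; apply/existsP; exists x; apply/existsP; exists y.
by rewrite hz1 hxy hs hz2.
Qed.

Section A.
Variable n : nat.
Variable s : 'S_n.+1.
Local Notation m := (@ord_max n).

Lemma cyc_all : is_cyclic s -> forall x y, x \in porbit s y.
Proof.
move=> /cards1P [O hO] x y.
have hx : porbit s x \in porbits s by apply: imset_f.
have hy : porbit s y \in porbits s by apply: imset_f.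
rewrite hO !inE in hx hy.
by rewrite (eqP hy) -(eqP hx) porbit_id.
Qed.

Lemma card_porbit_cyc : is_cyclic s -> forall x, #|porbit s x| = n.+1.
Proof.
move=> hc x.
have -> : porbit s x = setT by apply/setP => y; rewrite inE (cyc_all hc).
by rewrite cardsT card_ord.
Qed.

Lemma theta_cyc : is_cyclic s -> theta_seq s = traject s m n.+1.
Proof.
move=> hc; rewrite /theta_seq.
have -> : [seq x <- enum 'I_n.+1 | cycle_max s x] = [:: m].
  rewrite (@eq_filter _ _ (pred1 m)); first by rewrite filter_pred1_uniq ?enum_uniq ?mem_enum.
  move=> x; rewrite /cycle_max /=; apply/forallP/eqP.
    move=> H; have := H m; rewrite (cyc_all hc) /= => h.
    apply/val_inj/eqP; rewrite /= eqn_leq h andbT -ltnS; exact: ltn_ord.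
  by move=> -> y; apply/implyP => _; exact: leq_ord.
by rewrite /= cats0 /cycle_word (card_porbit_cyc hc).
Qed.

Lemma cyc_hat1 : wat (hat s) 1 = n.+1 -> is_cyclic s.
Proof.
rewrite /wat /= /hat /theta_seq enum_ordSr filter_rcons.
have hm : cycle_max s m by apply/forallP => y; apply/implyP => _; exact: leq_ord.
rewrite hm.
set L := [seq x <- _ | _] => H1.
have HL : L = [::].
  move: H1; case eL : L => [|k L'] // .
  have : k \in L by rewrite eL inE eqxx.
  rewrite mem_filter => /andP [_ /mapP [k' _ ek]].
  rewrite /= /cycle_word.
  case ep : #|porbit s k| => [|p]; first by move: (card_porbit_neq0 s k); rewrite ep.
  rewrite /= ek /= => e. have := ltn_ord k'. lia.
have Hnot : forall x, cycle_max s x -> x = m.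
  move=> x hx; apply/eqP; apply: contraT => hxm.
  have hxn : x < n.
    have : nat_of_ord x != n by apply: contra hxm => /eqP e; apply/eqP/val_inj.
    have := ltn_ord x. lia.
  have : x \in L.
    rewrite mem_filter hx /=; apply/mapP; exists (Ordinal hxn); first by rewrite mem_enum.
    by apply: val_inj.
  by rewrite HL.
have Hm : forall x, m \in porbit s x.
  move=> x.
  case: (@arg_maxnP _ x (fun y => y \in porbit s x) (fun y => nat_of_ord y) (porbit_id s x)) => M hM Hmax.
  have : cycle_max s M.
    apply/forallP => y; apply/implyP => hy.
    have e : porbit s M = porbit s x by apply/eqP; rewrite eq_porbit_mem.
    rewrite e in hy; exact: Hmax.
  by move/Hnot => eM; rewrite -eM.
apply/cards1P; exists (porbit s m); apply/setP => O; rewrite inE; apply/imsetP/eqP.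
  case=> x _ ->; apply/eqP; rewrite eq_porbit_mem porbit_sym; exact: Hm.
by move=> ->; exists m.
Qed.

End A.

Lemma sum_pos a b i (F : nat -> nat) : a <= i < b -> 0 < F i -> 0 < \sum_(a <= k < b) F k.
Proof.
move=> /andP[h1 h2] hF.
rewrite (@big_cat_nat _ _ _ i a b) //; last exact: ltnW.
rewrite /= (@big_ltn _ _ _ i b) //; lia.
Qed.

Lemma sum_pos_ex a b (F : nat -> nat) : 0 < \sum_(a <= k < b) F k -> exists2 i, a <= i < b & 0 < F i.
Proof.
elim: b => [|b IH]; first by rewrite big_geq.
case: (leqP a b) => hab; last by rewrite big_geq.
rewrite big_nat_recr //= => h.
case: (ltnP 0 (F b)) => hb; first by exists b => //; lia.
have [i hi hFi] : exists2 i, a <= i < b & 0 < F i by apply: IH; lia.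
by exists i => //; lia.
Qed.

Section L2.
Variable n : nat.
Variable s : 'S_n.+1.
Hypothesis hc : is_cyclic s.
Local Notation m := (@ord_max n).
Local Notation e k := (nat_of_ord (iter k s m)).
Local Notation w := (hat s).

Lemma hat_eq : hat s = [seq (val x).+1 | x <- traject s m n.+1].
Proof. by rewrite /hat theta_cyc. Qed.

Lemma size_hat : size w = n.+1.
Proof. by rewrite hat_eq size_map size_traject. Qed.

Lemma wat_e k : k <= n -> wat w k.+1 = (e k).+1.
Proof. by move=> hk; rewrite /wat /= hat_eq (nth_map m) ?size_traject // nth_traject. Qed.

Lemma uniq_traj : uniq (traject s m n.+1).
Proof. by have := uniq_traject_porbit s m; rewrite (card_porbit_cyc hc). Qed.

Lemma uniq_hat : uniq w.
Proof.
rewrite hat_eq map_inj_uniq; first exact: uniq_traj.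
by move=> a b [] /val_inj.
Qed.

Lemma e_n1 : e n.+1 = n.
Proof. by have := iter_porbit s m; rewrite (card_porbit_cyc hc) => ->. Qed.

Lemma e_inj k l : k <= n -> l <= n -> e k = e l -> k = l.
Proof.
move=> hk hl /val_inj h.
have := uniq_traj.
move/(nth_uniq m (i := k) (j := l)); rewrite !size_traject !nth_traject // h eqxx.
by move=> /(_ hk hl) /esym /eqP.
Qed.

Lemma e_lt k : e k <= n.
Proof. by rewrite -ltnS ltn_ord. Qed.

Lemma surj (x : 'I_n.+1) : exists2 k, k <= n & x = iter k s m.
Proof.
have := cyc_all hc x m; rewrite porbit_traject (card_porbit_cyc hc).
by case/trajectP => k hk ->; exists k.
Qed.

Lemma nofix (x : 'I_n.+1) : 0 < x -> s x != x.
Proof.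
move=> hx.
have := uniq_traject_porbit s x; rewrite (card_porbit_cyc hc) /=.
case/andP => hnot _; apply: contra hnot => /eqP e.
apply/trajectP; exists 0; last by rewrite /= e.
have := ltn_ord x; lia.
Qed.

Lemma bad_e a b : bad s (iter a s m) (iter b s m) =
  [&& e a < e b, e b.+1 < e a.+1 & (e b < e b.+1) || (e a.+1 < e a)].
Proof. by []. Qed.

Lemma e0 : e 0 = n.
Proof. by []. Qed.

Lemma dsum_pos (F : nat -> nat -> nat) a b : a.+2 <= b -> b < n ->
  0 < F a.+1 b.+1 -> 0 < \sum_(1 <= i < n.+1) \sum_(i.+2 <= j < n.+1) F i j.
Proof.
move=> h1 h2 h3; apply: (@sum_pos _ _ a.+1); first by lia.
by apply: (@sum_pos _ _ b.+1); first lia.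
Qed.

Lemma L2 : [exists x, exists y, bad s x y] = (0 < N_14_23 w + N_41_32 w + X w).
Proof.
have en := e_n1; have ez := e0.
have el := e_lt.
have we := wat_e.
rewrite /N_14_23 /N_41_32 /X /pair_count size_hat.
apply/idP/idP.
- case/existsP => x /existsP [y].
  have [a ha ->] := surj x; have [b hb ->] := surj y.
  rewrite bad_e => /and3P [h1 h2 h3].
  have ela := el a; have elb := el b; have ela1 := el a.+1; have elb1 := el b.+1.
  have [hab|hba] : a < b \/ b < a.
    have : a != b by apply/eqP => eab; move: h1; rewrite eab ltnn.
    lia.
  + have hbn : b < n.
      case: (ltnP b n) => // hbn; have ebn : b = n by lia.
      by move: h2 h3 ela1 elb; rewrite ebn en; lia.
    have hab2 : a.+2 <= b.
      case: (eqVneq b a.+1) => [eb|neb]; last by lia.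
      by move: h1 h2 h3; rewrite eb; lia.
    case/orP: h3 => h3.
    * rewrite -!addnA; apply: ltn_addr.
      apply: (@dsum_pos _ a b) => //.
      rewrite !we; try lia.
    * rewrite addn_gt0; apply/orP; right.
      apply: (@sum_pos _ _ a.+1); first by lia.
      rewrite addn_gt0; apply/orP; left.
      apply: (@sum_pos _ _ b.+1); first by lia.
      rewrite !we; try lia.
  + case/orP: h3 => h3.
    * case: (eqVneq a n) => [ean|nan].
        rewrite addn_gt0; apply/orP; right.
        apply: (@sum_pos _ _ b.+1); first by lia.
        rewrite addn_gt0; apply/orP; right.
        move: h1 h2; rewrite ean => h1 h2.
        rewrite !we; lia.
      have ha2 : b.+2 <= a.
        case: (eqVneq a b.+1) => [eb|neb]; last by lia.
        by move: h1 h2 h3; rewrite eb; lia.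
      rewrite addn_gt0; apply/orP; right.
      apply: (@sum_pos _ _ b.+1); first by lia.
      rewrite addn_gt0; apply/orP; left.
      apply: (@sum_pos _ _ a.+1); first by lia.
      rewrite !we; lia.
    * have han : a < n.
        case: (ltnP a n) => // han; have ean : a = n by lia.
        by move: h2 h3 ela ela1 elb elb1; rewrite ean en; lia.
      have ha2 : b.+2 <= a.
        case: (eqVneq a b.+1) => [eb|neb]; last by lia.
        by move: h1 h2 h3; rewrite eb; lia.
      rewrite addn_gt0; apply/orP; left.
      rewrite addn_gt0; apply/orP; right.
      apply: (@dsum_pos _ b a) => //.
      rewrite !we; lia.
- rewrite !addn_gt0 => /orP [/orP [hA|hB]|hC].
  + move/sum_pos_ex: hA => [[|a] hi] // /sum_pos_ex [[|b] hj] //.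
    rewrite (we a); last lia. rewrite (we a.+1); last lia.
    rewrite (we b); last lia. rewrite (we b.+1); last lia.
    move=> hP; apply/existsP; exists (iter a s m); apply/existsP; exists (iter b s m).
    rewrite bad_e; lia.
  + move/sum_pos_ex: hB => [[|a] hi] // /sum_pos_ex [[|b] hj] //.
    rewrite (we a); last lia. rewrite (we a.+1); last lia.
    rewrite (we b); last lia. rewrite (we b.+1); last lia.
    move=> hP; apply/existsP; exists (iter b s m); apply/existsP; exists (iter a s m).
    rewrite bad_e; lia.
  + move/sum_pos_ex: hC => [[|a] hi] //; rewrite addn_gt0 => /orP [hC|hQ].
    * move/sum_pos_ex: hC => [[|b] hj] //.
      rewrite (we a); last lia. rewrite (we a.+1); last lia.
      rewrite (we b); last lia. rewrite (we b.+1); last lia.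
      rewrite addn_gt0 => /orP [hP|hP].
      - apply/existsP; exists (iter b s m); apply/existsP; exists (iter a s m).
        rewrite bad_e; lia.
      - apply/existsP; exists (iter a s m); apply/existsP; exists (iter b s m).
        rewrite bad_e; lia.
    * move: hQ.
      rewrite (we n) //. rewrite (we a); last lia. rewrite (we a.+1); last lia.
      move=> hQ.
      have hne : iter a.+1 s m != n :> nat.
        apply/eqP => h.
        have := @e_inj a.+1 0; rewrite ez => /(_ ltac:(lia) ltac:(lia) h) //.
      apply/existsP; exists (iter n s m); apply/existsP; exists (iter a s m).
      rewrite bad_e en; have := el a.+1; lia.
Qed.


End L2.

Section Main.
Variable n : nat.
Variable s : 'S_n.+1.

Lemma cyc_iff : wat (hat s) 1 = n.+1 <-> is_cyclic s.
Proof.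
split; first exact: cyc_hat1.
by move=> hc; rewrite (wat_e hc (leq0n n)).
Qed.

Lemma K_B : is_cyclic s ->
  ((N_2_31 (hat s))%:Z + (N_14_23 (hat s))%:Z + (N_41_32 (hat s))%:Z
        - (N_24_13 (hat s))%:Z - (N_31_42 (hat s))%:Z =
   (N_14_23 (hat s) + N_41_32 (hat s) + X (hat s))%:Z)%R.
Proof.
move=> hc; rewrite (C1 (uniq_hat hc)); lia.
Qed.

Lemma K_C : is_cyclic s ->
  ((N_231 (hat s))%:Z + (N_23_41 (hat s))%:Z + (N_24_31 (hat s))%:Z
        + (N_32_41 (hat s))%:Z + (N_14_23 (hat s))%:Z + (N_41_32 (hat s))%:Z
        - (N_24_13 (hat s))%:Z =
   (N_14_23 (hat s) + N_41_32 (hat s) + X (hat s))%:Z)%R.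
Proof.
move=> hc; have h1 := C1 (uniq_hat hc); have h2 := C2 (uniq_hat hc); lia.
Qed.

Lemma avoid_K : is_cyclic s ->
  ~~ contains321 s = (N_14_23 (hat s) + N_41_32 (hat s) + X (hat s) == 0).
Proof.
move=> hc; rewrite (L1 (nofix hc)) (L2 hc); lia.
Qed.

Lemma main_gen (Z : int) : (is_cyclic s -> Z = Posz (N_14_23 (hat s) + N_41_32 (hat s) + X (hat s))) ->
  (in_C321 s <-> (wat (hat s) 1 = n.+1 /\ Z = 0%R)).
Proof.
move=> hZ; rewrite cyc_iff /in_C321; split.
  case/andP => hc ha; split => //; rewrite (hZ hc).
  by move: ha; rewrite (avoid_K hc) => /eqP ->.
case=> hc hz; rewrite hc /= (avoid_K hc).
move: hz; rewrite (hZ hc); lia.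
Qed.
End Main.

Unset Implicit Arguments.
Local Open Scope ring_scope.

Theorem mainTheorem3 (n : nat) (hn : (1 <= n)%N) (s : 'S_n) :
  (in_C321 s <->
     (wat (hat s) 1 = n /\
      (N_2_31 (hat s))%:Z + (N_14_23 (hat s))%:Z + (N_41_32 (hat s))%:Z
        - (N_24_13 (hat s))%:Z - (N_31_42 (hat s))%:Z = 0))
  /\
  (in_C321 s <->
     (wat (hat s) 1 = n /\
      (N_231 (hat s))%:Z + (N_23_41 (hat s))%:Z + (N_24_31 (hat s))%:Z
        + (N_32_41 (hat s))%:Z + (N_14_23 (hat s))%:Z + (N_41_32 (hat s))%:Z
        - (N_24_13 (hat s))%:Z = 0)).
Proof.
case: n hn s => // n _ s.
split; apply: main_gen; [exact: K_B | exact: K_C].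
Qed.
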